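(* For every $n\ge1$ and $t\in(0,1)$, $$n\beta+n(n+\gamma)t-(2n+\alpha+\beta+\gamma)(t-1)r_n+(2n+\alpha+\beta+\gamma)ty_n+(t-1)\sum_{j=0}^{n-1}R_j=0.$$
   Context: Fix $\alpha,\beta,\gamma>0$ and real constants $A,B$ with $A\ge0$, $A+B\ge0$, not both $A$ and $A+B$ equal to $0$. Let $\theta$ be the Heaviside function. For $t\in(0,1)$ put $w(x)=x^{\alpha}(1-x)^{\beta}|x-t|^{\gamma}(A+B\theta(x-t))$ on $[0,1]$. Let $P_n$ be the monic orthogonal polynomials w.r.t. $w$ on $[0,1]$ with $\int_0^1P_mP_nw\,dx=h_n\delta_{mn}$. Define $R_n=\frac{\beta}{h_n}\int_0^1\frac{P_n^2(y)w(y)}{1-y}dy$, and for $n\ge1$, $y_n=\frac{\alpha}{h_{n-1}}\int_0^1\frac{P_nP_{n-1}w}{y}dy$, $r_n=\frac{\beta}{h_{n-1}}\int_0^1\frac{P_nP_{n-1}w}{1-y}dy$. *)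

(* Defs.v *)
From Stdlib Require Import Reals ClassicalEpsilon.
Open Scope R_scope.

(* real power x^y for x >= 0, with the convention 0^y = 0 (y > 0) *)
Definition rpow (x y : R) : R :=
  if Req_EM_T x 0 then 0 else Rpower x y.

(* Heaviside function (value at 0 is irrelevant for the integrals) *)
Definition heaviside (x : R) : R := if Rle_dec 0 x then 1 else 0.

Definition weight (a b g A B t x : R) : R :=
  rpow x a * rpow (1 - x) b * rpow (Rabs (x - t)) g * (A + B * heaviside (x - t)).

Definition improper_int01 (f : R -> R) (l : R) : Prop :=
  forall eps, 0 < eps -> exists delta, 0 < delta /\
    forall u v, 0 < u < delta -> 1 - delta < v < 1 -> u < v ->
      exists pr : Riemann_integrable f u v, Rabs (RiemannInt pr - l) < eps.

Definition Int01 (f : R -> R) : R :=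
  epsilon (inhabits 0) (fun l => improper_int01 f l).

Definition peval (c : nat -> nat -> R) (n : nat) (x : R) : R :=
  sum_f_R0 (fun k => c n k * x ^ k) n.

Definition monic_orthogonal (c : nat -> nat -> R) (w : R -> R) : Prop :=
  (forall n, c n n = 1) /\
  (forall m n, m <> n -> Int01 (fun x => peval c m x * peval c n x * w x) = 0).

Definition hn (c : nat -> nat -> R) (w : R -> R) (n : nat) : R :=
  Int01 (fun y => peval c n y ^ 2 * w y).

Definition Rn (b : R) (c : nat -> nat -> R) (w : R -> R) (n : nat) : R :=
  b / hn c w n * Int01 (fun y => peval c n y ^ 2 * w y / (1 - y)).

Definition yn (a : R) (c : nat -> nat -> R) (w : R -> R) (n : nat) : R :=
  a / hn c w (n - 1) * Int01 (fun y => peval c n y * peval c (n - 1) y * w y / y).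

Definition rn (b : R) (c : nat -> nat -> R) (w : R -> R) (n : nat) : R :=
  b / hn c w (n - 1) * Int01 (fun y => peval c n y * peval c (n - 1) y * w y / (1 - y)).

(* Main.v *)
Require Import Defs.
From Stdlib Require Import Reals.
From Stdlib Require Import Lra Lia ClassicalEpsilon FunctionalExtensionality.
From Coquelicot Require Import Coquelicot.
Import Defs.
Open Scope R_scope.

Ltac rabs := unfold Rabs in *; repeat match goal with |- context [Rcase_abs ?x] => destruct (Rcase_abs x) | H : context [Rcase_abs ?x] |- _ => destruct (Rcase_abs x) end; lra.

Definition imp2 (f : R -> R) (l : R) : Prop :=
  forall eps, 0 < eps -> exists delta, 0 < delta /\
    forall u v, 0 < u < delta -> 1 - delta < v < 1 -> u < v ->
      ex_RInt f u v /\ Rabs (RInt f u v - l) < eps.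

Lemma imp2_imp f l : imp2 f l -> improper_int01 f l.
Proof.
  intros H eps Heps. destruct (H eps Heps) as [d [Hd H']].
  exists d; split; auto. intros u v Hu Hv Huv.
  destruct (H' u v Hu Hv Huv) as [Hex Hl].
  exists (ex_RInt_Reals_0 _ _ _ Hex). rewrite <- RInt_Reals. exact Hl.
Qed.

Lemma imp_imp2 f l : improper_int01 f l -> imp2 f l.
Proof.
  intros H eps Heps. destruct (H eps Heps) as [d [Hd H']].
  exists d; split; auto. intros u v Hu Hv Huv.
  destruct (H' u v Hu Hv Huv) as [pr Hl].
  split. apply ex_RInt_Reals_1; exact pr. rewrite (RInt_Reals _ _ _ pr). exact Hl.
Qed.

Lemma imp2_unique f l1 l2 : imp2 f l1 -> imp2 f l2 -> l1 = l2.
Proof.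
  intros H1 H2.
  destruct (Req_dec (l1 - l2) 0) as [E|E]; [lra|]. exfalso.
  set (e := Rabs (l1 - l2) / 2).
  assert (He : 0 < e) by (unfold e; apply Rabs_pos_lt in E; lra).
  destruct (H1 e He) as [d1 [Hd1 H1']]. destruct (H2 e He) as [d2 [Hd2 H2']].
  set (m := Rmin (Rmin d1 d2) (1/2)).
  assert (Hm : 0 < m) by (unfold m; repeat apply Rmin_glb_lt; lra).
  assert (Hm1 : m <= d1) by (unfold m; apply Rle_trans with (Rmin d1 d2); [apply Rmin_l|apply Rmin_l]).
  assert (Hm2 : m <= d2) by (unfold m; apply Rle_trans with (Rmin d1 d2); [apply Rmin_l|apply Rmin_r]).
  assert (Hm3 : m <= 1/2) by (unfold m; apply Rmin_r).
  destruct (H1' (m/2) (1 - m/2)) as [_ A1]; try lra.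
  destruct (H2' (m/2) (1 - m/2)) as [_ A2]; try lra.
  unfold e in *. revert A1 A2. generalize (RInt f (m/2) (1 - m/2)). intros r. rabs.
Qed.

Lemma Int01_eq f l : imp2 f l -> Int01 f = l.
Proof.
  intros H. unfold Int01.
  assert (Ex : exists l, improper_int01 f l) by (exists l; apply imp2_imp; auto).
  pose proof (epsilon_spec (inhabits 0) (fun l => improper_int01 f l) Ex) as S.
  simpl in S. apply imp_imp2 in S. eapply imp2_unique; eauto.
Qed.

Lemma imp2_ext f g l : (forall x, 0 < x < 1 -> f x = g x) -> imp2 f l -> imp2 g l.
Proof.
  intros E H eps Heps. destruct (H eps Heps) as [d [Hd H']].
  exists d; split; auto. intros u v Hu Hv Huv.
  destruct (H' u v Hu Hv Huv) as [Hex Hl].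
  assert (E' : forall x, Rmin u v < x < Rmax u v -> f x = g x).
  { intros x Hx. rewrite Rmin_left in Hx by lra. rewrite Rmax_right in Hx by lra. apply E; lra. }
  split. eapply ex_RInt_ext; eauto.
  rewrite <- (RInt_ext _ _ _ _ E'). exact Hl.
Qed.

Lemma imp2_plus f g l1 l2 : imp2 f l1 -> imp2 g l2 -> imp2 (fun x => f x + g x) (l1 + l2).
Proof.
  intros H1 H2 eps Heps.
  destruct (H1 (eps/2)) as [d1 [Hd1 H1']]; [lra|].
  destruct (H2 (eps/2)) as [d2 [Hd2 H2']]; [lra|].
  exists (Rmin d1 d2); split; [apply Rmin_glb_lt; auto|].
  intros u v Hu Hv Huv.
  assert (X1 := Rmin_l d1 d2). assert (X2 := Rmin_r d1 d2).
  destruct (H1' u v) as [E1 A1]; try lra. destruct (H2' u v) as [E2 A2]; try lra.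
  split. apply (ex_RInt_plus f g); auto.
  assert (RInt (fun x => f x + g x) u v = RInt f u v + RInt g u v) as ->.
  { apply (RInt_plus f g); auto. }
  revert A1 A2. generalize (RInt f u v) (RInt g u v). intros; rabs.
Qed.

Lemma imp2_scal k f l : imp2 f l -> imp2 (fun x => k * f x) (k * l).
Proof.
  intros H eps Heps.
  destruct (H (eps / (Rabs k + 1))) as [d [Hd H']].
  { apply Rdiv_lt_0_compat; auto. pose proof (Rabs_pos k); lra. }
  exists d; split; auto. intros u v Hu Hv Huv.
  destruct (H' u v Hu Hv Huv) as [E A].
  split. apply (ex_RInt_scal f); auto.
  assert (RInt (fun x => k * f x) u v = k * RInt f u v) as ->.
  { apply (RInt_scal f); auto. }
  replace (k * RInt f u v - k * l) with (k * (RInt f u v - l)) by ring.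
  rewrite Rabs_mult.
  pose proof (Rabs_pos k). pose proof (Rabs_pos (RInt f u v - l)).
  apply Rle_lt_trans with ((Rabs k + 1) * Rabs (RInt f u v - l)).
  nra.
  apply Rmult_lt_reg_l with (/ (Rabs k + 1)). apply Rinv_0_lt_compat; lra.
  rewrite <- Rmult_assoc, Rinv_l by lra. unfold Rdiv in A. lra.
Qed.

Definition lim0 (G : R -> R) (L : R) := forall eps, 0 < eps -> exists d, 0 < d /\
  forall x, 0 < x < d -> Rabs (G x - L) < eps.
Definition lim1 (G : R -> R) (L : R) := forall eps, 0 < eps -> exists d, 0 < d /\
  forall x, 1 - d < x < 1 -> Rabs (G x - L) < eps.

Lemma imp2_deriv (G dG : R -> R) L0 L1 :
  (forall x, 0 < x < 1 -> is_derive G x (dG x)) ->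
  (forall x, 0 < x < 1 -> continuous dG x) ->
  lim0 G L0 -> lim1 G L1 -> imp2 dG (L1 - L0).
Proof.
  intros HD HC H0 H1 eps Heps.
  destruct (H0 (eps/2)) as [d0 [Hd0 H0']]; [lra|].
  destruct (H1 (eps/2)) as [d1 [Hd1 H1']]; [lra|].
  exists (Rmin d0 d1); split; [apply Rmin_glb_lt; auto|].
  intros u v Hu Hv Huv.
  assert (X1 := Rmin_l d0 d1). assert (X2 := Rmin_r d0 d1).
  assert (I : is_RInt dG u v (minus (G v) (G u))).
  { apply (is_RInt_derive G dG); rewrite Rmin_left by lra; rewrite Rmax_right by lra;
      intros; [apply HD|apply HC]; lra. }
  split. eexists; eauto.
  rewrite (is_RInt_unique _ _ _ _ I).
  assert (A0 := H0' u ltac:(lra)). assert (A1 := H1' v ltac:(lra)).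
  unfold minus, plus, opp; simpl. revert A0 A1. generalize (G u) (G v). intros; rabs.
Qed.

Lemma imp2_nonneg (h : R -> R) :
  (forall x, 0 < x < 1 -> continuous h x) ->
  (forall x, 0 < x < 1 -> 0 <= h x) ->
  (exists M, forall u v, 0 < u -> u < v -> v < 1 -> RInt h u v <= M) ->
  exists l, imp2 h l.
Proof.
  intros HC HP [M HM].
  assert (Hex : forall u v, 0 < u -> u <= v -> v < 1 -> ex_RInt h u v).
  { intros u v ? ? ?. apply (ex_RInt_continuous (V:=R_CompleteNormedModule)). rewrite Rmin_left by lra; rewrite Rmax_right by lra.
    intros; apply HC; lra. }
  set (E := fun r => exists u v, 0 < u /\ u < v /\ v < 1 /\ r = RInt h u v).
  assert (Hb : bound E) by (exists M; intros r [u [v [? [? [? ->]]]]]; auto).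
  assert (Hne : exists r, E r) by (exists (RInt h (1/4) (3/4)); exists (1/4), (3/4); repeat split; lra).
  destruct (completeness E Hb Hne) as [l [Hub Hlub]].
  exists l. intros eps Heps.
  assert (exists r, E r /\ l - eps < r) as [r [[u0 [v0 [? [? [? ->]]]]] Hr]].
  { apply Classical_Prop.NNPP; intro N.
    assert (l <= l - eps); [|lra]. apply Hlub. intros r Er.
    apply Rnot_lt_le. intro; apply N; exists r; auto. }
  exists (Rmin u0 (1 - v0)); split; [apply Rmin_glb_lt; lra|].
  intros u v Hu Hv Huv.
  assert (X1 := Rmin_l u0 (1 - v0)). assert (X2 := Rmin_r u0 (1 - v0)).
  split. apply Hex; lra.
  assert (Hle : RInt h u v <= l) by (apply Hub; exists u, v; repeat split; lra).
  assert (Hge : RInt h u0 v0 <= RInt h u v).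
  { rewrite <- (RInt_Chasles h u u0 v) by (apply Hex; lra).
    rewrite <- (RInt_Chasles h u0 v0 v) by (apply Hex; lra).
    assert (0 <= RInt h u u0) by (apply RInt_ge_0; [lra|apply Hex; lra|intros; apply HP; lra]).
    assert (0 <= RInt h v0 v) by (apply RInt_ge_0; [lra|apply Hex; lra|intros; apply HP; lra]).
    unfold plus; simpl. lra. }
  revert Hle Hge Hr. generalize (RInt h u v) (RInt h u0 v0). intros; rabs.
Qed.

Lemma imp2_dom (f gd : R -> R) K lg M :
  (forall x, 0 < x < 1 -> continuous f x) ->
  (forall x, 0 < x < 1 -> continuous gd x) ->
  0 <= K ->
  (forall x, 0 < x < 1 -> Rabs (f x) <= K * gd x) ->
  imp2 gd lg ->
  (forall u v, 0 < u -> u < v -> v < 1 -> RInt gd u v <= M) ->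
  exists l, imp2 f l.
Proof.
  intros Cf Cg HK Hd Ig HM.
  assert (Hexg : forall u v, 0 < u -> u <= v -> v < 1 -> ex_RInt gd u v).
  { intros u v ? ? ?. apply (ex_RInt_continuous (V:=R_CompleteNormedModule)). rewrite Rmin_left by lra; rewrite Rmax_right by lra.
    intros; apply Cg; lra. }
  assert (Hexf : forall u v, 0 < u -> u <= v -> v < 1 -> ex_RInt f u v).
  { intros u v ? ? ?. apply (ex_RInt_continuous (V:=R_CompleteNormedModule)). rewrite Rmin_left by lra; rewrite Rmax_right by lra.
    intros; apply Cf; lra. }
  destruct (imp2_nonneg (fun x => f x + K * gd x)) as [lh Ih].
  - intros x Hx. apply (continuous_plus f (fun x => K * gd x)). auto.
    apply (continuous_scal_r K gd). auto.
  - intros x Hx. specialize (Hd x Hx). revert Hd. rabs.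
  - exists (2 * K * M). intros u v Hu Huv Hv.
    apply Rle_trans with (RInt (fun x => 2 * K * gd x) u v).
    + apply RInt_le. lra.
      apply (ex_RInt_plus f (fun x => K * gd x)). apply Hexf; lra. apply (ex_RInt_scal gd). apply Hexg; lra.
      apply (ex_RInt_scal gd). apply Hexg; lra.
      intros x Hx. specialize (Hd x ltac:(lra)). revert Hd. rabs.
    + assert (RInt (fun x => 2 * K * gd x) u v = 2 * K * RInt gd u v) as ->.
      { apply (RInt_scal gd). apply Hexg; lra. } specialize (HM u v Hu Huv Hv). nra.
  - exists (lh + (-K) * lg).
    apply imp2_ext with (fun x => (f x + K * gd x) + (-K) * gd x).
    intros; ring.
    apply imp2_plus; auto. apply imp2_scal; auto.
Qed.

Lemma rpow_pos x e : 0 < x -> rpow x e = exp (e * ln x).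
Proof. intros. unfold rpow, Rpower. destruct (Req_EM_T x 0); [lra|reflexivity]. Qed.
Lemma rpow_zero e : rpow 0 e = 0.
Proof. unfold rpow; destruct (Req_EM_T 0 0); [auto|congruence]. Qed.
Lemma rpow_nonneg x e : 0 <= x -> 0 <= rpow x e.
Proof. intros. destruct (Req_dec x 0) as [->|]. rewrite rpow_zero; lra.
  rewrite rpow_pos by lra. left; apply exp_pos. Qed.
Lemma rpow_le1 x e : 0 <= x <= 1 -> 0 < e -> rpow x e <= 1.
Proof. intros. destruct (Req_dec x 0) as [->|]. rewrite rpow_zero; lra.
  rewrite rpow_pos by lra. rewrite <- exp_0.
  assert (ln x <= 0) by (rewrite <- ln_1; apply ln_le; lra).
  destruct (Req_dec (e * ln x) 0) as [E|E]. rewrite E; lra.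
  left; apply exp_increasing. nra. Qed.
Lemma rpow_small e : 0 < e -> forall eps, 0 < eps -> exists d, 0 < d /\
  forall x, 0 <= x < d -> rpow x e < eps.
Proof.
  intros He eps Heps. exists (exp (ln eps / e)); split. apply exp_pos.
  intros x Hx. destruct (Req_dec x 0) as [->|]. rewrite rpow_zero; lra.
  rewrite rpow_pos by lra. rewrite <- (exp_ln eps) by lra. apply exp_increasing.
  assert (ln x < ln eps / e).
  { rewrite <- (ln_exp (ln eps / e)). apply ln_increasing; lra. }
  apply Rmult_lt_reg_l with (/ e). apply Rinv_0_lt_compat; lra.
  replace (/ e * (e * ln x)) with (ln x) by (field; lra). unfold Rdiv in H0. lra.
Qed.

Lemma cont_of_eps (f : R -> R) x :
  (forall eps, 0 < eps -> exists d, 0 < d /\ forall y, Rabs (y - x) < d -> Rabs (f y - f x) < eps) ->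
  continuous f x.
Proof.
  intros H. apply continuity_pt_filterlim. intros eps Heps.
  destruct (H eps Heps) as [d [Hd H']]. exists d; split; auto.
  intros y [_ Hy]. apply H'. exact Hy.
Qed.
Lemma eps_of_cont (f : R -> R) x : continuous f x ->
  forall eps, 0 < eps -> exists d, 0 < d /\ forall y, Rabs (y - x) < d -> Rabs (f y - f x) < eps.
Proof.
  intros H. apply continuity_pt_filterlim in H. intros eps Heps.
  destruct (H eps Heps) as [d [Hd H']]. exists d; split; auto.
  intros y Hy. destruct (Req_dec y x) as [->|Hne].
  replace (f x - f x) with 0 by ring; rewrite Rabs_R0; lra.
  apply H'. split; [split; [exact I|auto]|exact Hy].
Qed.

Lemma locally_ball (x d : R) (P : R -> Prop) : 0 < d ->
  (forall y, Rabs (y - x) < d -> P y) -> locally x P.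
Proof.
  intros Hd H. exists (mkposreal d Hd). intros y Hy. apply H. exact Hy.
Qed.

Lemma cont_ext_loc (f g : R -> R) (x : R) : locally x (fun y => f y = g y) -> continuous f x -> continuous g x.
Proof. intros H C. exact (@continuous_ext_loc R_UniformSpace R_UniformSpace g f x H C). Qed.
Lemma cont_of_der (f : R -> R) (x l : R) : is_derive f x l -> continuous f x.
Proof. intros H. apply (@ex_derive_continuous R_AbsRing R_NormedModule). exists l; exact H. Qed.

Lemma lim0_cont (f : R -> R) : continuous f 0 -> lim0 f (f 0).
Proof. intros H eps Heps. destruct (eps_of_cont f 0 H eps Heps) as [d [Hd H']].
  exists d; split; auto. intros x Hx. apply H'. rabs. Qed.
Lemma lim1_cont (f : R -> R) : continuous f 1 -> lim1 f (f 1).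
Proof. intros H eps Heps. destruct (eps_of_cont f 1 H eps Heps) as [d [Hd H']].
  exists d; split; auto. intros x Hx. apply H'. rabs. Qed.
Lemma lim0_plus f g l1 l2 : lim0 f l1 -> lim0 g l2 -> lim0 (fun x => f x + g x) (l1 + l2).
Proof. intros H1 H2 eps Heps. destruct (H1 (eps/2)) as [d1 [? H1']]; [lra|].
  destruct (H2 (eps/2)) as [d2 [? H2']]; [lra|].
  exists (Rmin d1 d2); split; [apply Rmin_glb_lt; auto|]. intros x Hx.
  assert (X1 := Rmin_l d1 d2). assert (X2 := Rmin_r d1 d2).
  specialize (H1' x ltac:(lra)). specialize (H2' x ltac:(lra)). revert H1' H2'. rabs. Qed.
Lemma lim1_plus f g l1 l2 : lim1 f l1 -> lim1 g l2 -> lim1 (fun x => f x + g x) (l1 + l2).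
Proof. intros H1 H2 eps Heps. destruct (H1 (eps/2)) as [d1 [? H1']]; [lra|].
  destruct (H2 (eps/2)) as [d2 [? H2']]; [lra|].
  exists (Rmin d1 d2); split; [apply Rmin_glb_lt; auto|]. intros x Hx.
  assert (X1 := Rmin_l d1 d2). assert (X2 := Rmin_r d1 d2).
  specialize (H1' x ltac:(lra)). specialize (H2' x ltac:(lra)). revert H1' H2'. rabs. Qed.

Lemma hv_vals y : heaviside y = 1 /\ 0 <= y \/ heaviside y = 0 /\ y < 0.
Proof. unfold heaviside. destruct (Rle_dec 0 y); [left|right]; split; lra. Qed.

Section Wt.
Variables a b g A B t : R.
Hypotheses (ha : 0 < a) (hb : 0 < b) (hg : 0 < g) (hA : 0 <= A) (hAB : 0 <= A + B)
  (ht0 : 0 < t) (ht1 : t < 1).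

Definition kf x := rpow (Rabs (x - t)) g * (A + B * heaviside (x - t)).
Definition Sf x := rpow x a * rpow (1 - x) b.
Definition Cw := A + Rabs B.

Lemma w_eq x : weight a b g A B t x = Sf x * kf x.
Proof. unfold weight, Sf, kf; ring. Qed.

Lemma hv_bnd y : 0 <= A + B * heaviside y <= Cw.
Proof. unfold Cw. destruct (hv_vals y) as [[-> _]|[-> _]]; rabs. Qed.

Lemma kf_nonneg x : 0 <= kf x.
Proof. unfold kf. apply Rmult_le_pos. apply rpow_nonneg, Rabs_pos. apply hv_bnd. Qed.
Lemma kf_bnd x : kf x <= Cw * rpow (Rabs (x - t)) g.
Proof. unfold kf. pose proof (hv_bnd (x - t)). pose proof (rpow_nonneg (Rabs (x - t)) g (Rabs_pos _)). nra. Qed.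
Lemma kf_le x : 0 <= x <= 1 -> kf x <= Cw.
Proof. intros. pose proof (kf_bnd x). pose proof (hv_bnd 0).
  assert (rpow (Rabs (x - t)) g <= 1) by (apply rpow_le1; auto; split; [apply Rabs_pos|rabs]).
  nra. Qed.
Lemma kf_t : kf t = 0.
Proof. unfold kf. replace (t - t) with 0 by ring. rewrite Rabs_R0, rpow_zero. ring. Qed.
Lemma Cw_nonneg : 0 <= Cw.
Proof. pose proof (hv_bnd 0); lra. Qed.

Lemma kf_small : forall eps, 0 < eps -> exists d, 0 < d /\ forall x, Rabs (x - t) < d -> Rabs (kf x) < eps.
Proof.
  intros eps Heps. destruct (rpow_small g hg (eps / (Cw + 1))) as [d [Hd H]].
  { apply Rdiv_lt_0_compat; auto. pose proof Cw_nonneg; lra. }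
  exists d; split; auto. intros x Hx.
  specialize (H (Rabs (x - t)) (conj (Rabs_pos _) Hx)).
  rewrite Rabs_pos_eq by apply kf_nonneg.
  pose proof (kf_bnd x). pose proof Cw_nonneg.
  pose proof (rpow_nonneg (Rabs (x - t)) g (Rabs_pos _)).
  apply Rle_lt_trans with (Cw * rpow (Rabs (x - t)) g); auto.
  apply Rle_lt_trans with ((Cw + 1) * rpow (Rabs (x - t)) g). nra.
  apply Rmult_lt_reg_l with (/ (Cw + 1)). apply Rinv_0_lt_compat; lra.
  rewrite <- Rmult_assoc, Rinv_l by lra. unfold Rdiv in H. lra.
Qed.

Lemma kf_right x : t < x -> locally x (fun y => (A + B) * exp (g * ln (y - t)) = kf y).
Proof.
  intros H. apply (locally_ball x (x - t)); [lra|]. intros y Hy.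
  assert (t < y) by rabs. unfold kf. rewrite Rabs_pos_eq by lra. rewrite rpow_pos by lra.
  destruct (hv_vals (y - t)) as [[-> _]|[_ ?]]; [ring|lra].
Qed.
Lemma kf_left x : x < t -> locally x (fun y => A * exp (g * ln (t - y)) = kf y).
Proof.
  intros H. apply (locally_ball x (t - x)); [lra|]. intros y Hy.
  assert (y < t) by rabs. unfold kf. rewrite Rabs_left by lra. rewrite rpow_pos by lra.
  replace (- (y - t)) with (t - y) by ring.
  destruct (hv_vals (y - t)) as [[_ ?]|[-> _]]; [lra|ring].
Qed.

Lemma kf_cont x : continuous kf x.
Proof.
  destruct (Rtotal_order x t) as [H|[->|H]].
  - apply (cont_ext_loc _ _ _ (kf_left x H)). eapply cont_of_der.
    auto_derive. lra. reflexivity.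
  - apply cont_of_eps. intros eps Heps. destruct (kf_small eps Heps) as [d [Hd H]].
    exists d; split; auto. intros y Hy. rewrite kf_t, Rminus_0_r. apply H; auto.
  - apply (cont_ext_loc _ _ _ (kf_right x H)). eapply cont_of_der.
    auto_derive. lra. reflexivity.
Qed.

Definition hh x := (x - t) * kf x.
Lemma hh_der x : is_derive hh x ((g + 1) * kf x).
Proof.
  destruct (Rtotal_order x t) as [H|[->|H]].
  - apply is_derive_ext_loc with (fun y => (y - t) * (A * exp (g * ln (t - y)))).
    { generalize (kf_left x H). apply filter_imp. intros y E. unfold hh. rewrite <- E. reflexivity. }
    assert (E := kf_left x H). apply locally_singleton in E. rewrite <- E.
    auto_derive. lra. set (ee := exp (g * ln (t - x))). change (t + - x) with (t - x). fold ee. field. lra.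
  - apply is_derive_Reals. intros eps Heps. destruct (kf_small eps Heps) as [d [Hd H]].
    exists (mkposreal d Hd). intros h Hh Hlt. simpl in Hlt.
    unfold hh. rewrite kf_t. replace (t + h - t) with h by ring.
    replace ((h * kf (t + h) - (t - t) * 0) / h - (g + 1) * 0) with (kf (t + h)) by (field; auto).
    apply H. replace (t + h - t) with h by ring. auto.
  - apply is_derive_ext_loc with (fun y => (y - t) * ((A + B) * exp (g * ln (y - t)))).
    { generalize (kf_right x H). apply filter_imp. intros y E. unfold hh. rewrite <- E. reflexivity. }
    assert (E := kf_right x H). apply locally_singleton in E. rewrite <- E.
    auto_derive. lra. set (ee := exp (g * ln (x - t))). change (x + - t) with (x - t). fold ee. field. lra.
Qed.

Lemma Sf_loc x : 0 < x < 1 -> locally x (fun y => exp (a * ln y) * exp (b * ln (1 - y)) = Sf y).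
Proof.
  intros H. apply (locally_ball x (Rmin x (1 - x))). apply Rmin_glb_lt; lra.
  intros y Hy. assert (X1 := Rmin_l x (1 - x)). assert (X2 := Rmin_r x (1 - x)).
  assert (0 < y < 1) by rabs. unfold Sf. rewrite !rpow_pos by lra. reflexivity.
Qed.
Lemma Sf_der x : 0 < x < 1 -> is_derive Sf x (Sf x * (a / x - b / (1 - x))).
Proof.
  intros H. apply is_derive_ext_loc with (fun y => exp (a * ln y) * exp (b * ln (1 - y))).
  apply Sf_loc; auto.
  assert (E := Sf_loc x H). apply locally_singleton in E. rewrite <- E.
  auto_derive. lra. change (1 + - x) with (1 - x). field. lra.
Qed.
Lemma Sf_cont x : 0 < x < 1 -> continuous Sf x.
Proof. intros H. eapply cont_of_der. apply Sf_der; auto. Qed.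
Lemma Sf_bnd x : 0 <= x <= 1 -> 0 <= Sf x <= rpow x a /\ Sf x <= rpow (1 - x) b.
Proof. intros H. unfold Sf.
  pose proof (rpow_nonneg x a ltac:(lra)). pose proof (rpow_nonneg (1 - x) b ltac:(lra)).
  pose proof (rpow_le1 x a ltac:(lra) ha). pose proof (rpow_le1 (1 - x) b ltac:(lra) hb).
  split; [split|]; nra. Qed.

Lemma w_cont x : 0 < x < 1 -> continuous (weight a b g A B t) x.
Proof.
  intros H. apply (continuous_ext (fun y => Sf y * kf y)). intros; symmetry; apply w_eq.
  apply (continuous_mult Sf kf). apply Sf_cont; auto. apply kf_cont.
Qed.

End Wt.

Lemma cplus (f g : R -> R) x : continuous f x -> continuous g x -> continuous (fun y => f y + g y) x.
Proof. intros H1 H2. exact (@continuous_plus R_UniformSpace R_AbsRing R_NormedModule f g x H1 H2). Qed.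
Lemma cmult (f g : R -> R) x : continuous f x -> continuous g x -> continuous (fun y => f y * g y) x.
Proof. intros H1 H2. exact (@continuous_mult R_UniformSpace R_AbsRing f g x H1 H2). Qed.
Lemma cconst (c x : R) : continuous (fun _ : R => c) x.
Proof. exact (@continuous_const R_UniformSpace R_UniformSpace c x). Qed.
Lemma cid (x : R) : continuous (fun y : R => y) x.
Proof. exact (@continuous_id R_UniformSpace x). Qed.
Lemma cinv (f : R -> R) x : continuous f x -> f x <> 0 -> continuous (fun y => / f y) x.
Proof. intros H1 H2. exact (continuous_Rinv_comp f x H1 H2). Qed.
Lemma cminus (f g : R -> R) x : continuous f x -> continuous g x -> continuous (fun y => f y - g y) x.
Proof. intros H1 H2. apply (cplus f (fun y => - g y)); auto.
  apply (cont_ext_loc (fun y => (-1) * g y)). apply (locally_ball x 1); [lra|]. intros; ring.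
  apply cmult; auto; apply cconst. Qed.
Lemma cdiv (f g : R -> R) x : continuous f x -> continuous g x -> g x <> 0 -> continuous (fun y => f y / g y) x.
Proof. intros. apply (cmult f (fun y => / g y)); auto. apply cinv; auto. Qed.
Lemma cext (f g : R -> R) x : (forall y, f y = g y) -> continuous f x -> continuous g x.
Proof. intros E. apply cont_ext_loc. apply (locally_ball x 1); [lra|]. intros; auto. Qed.

Lemma is_derive_val (f : R -> R) x l1 l2 : is_derive f x l1 -> l1 = l2 -> is_derive f x l2.
Proof. intros H ->; exact H. Qed.

Lemma imp2_pos (h : R -> R) l x0 :
  (forall x, 0 < x < 1 -> continuous h x) ->
  (forall x, 0 < x < 1 -> 0 <= h x) -> 0 < x0 < 1 -> 0 < h x0 -> imp2 h l -> 0 < l.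
Proof.
  intros HC HP Hx0 Hpos Hl.
  assert (Hex : forall u v, 0 < u -> u <= v -> v < 1 -> ex_RInt h u v).
  { intros u v ? ? ?. apply (ex_RInt_continuous (V:=R_CompleteNormedModule)).
    rewrite Rmin_left by lra; rewrite Rmax_right by lra. intros; apply HC; lra. }
  destruct (eps_of_cont h x0 (HC x0 Hx0) (h x0 / 2)) as [r [Hr Hr']]; [lra|].
  set (r' := Rmin (Rmin (r/2) (x0/2)) ((1 - x0)/2)).
  assert (Hr1 : 0 < r') by (unfold r'; repeat apply Rmin_glb_lt; lra).
  assert (Hr2 : r' <= r/2 /\ r' <= x0/2 /\ r' <= (1-x0)/2).
  { unfold r'. split; [|split].
    apply Rle_trans with (Rmin (r/2) (x0/2)); [apply Rmin_l|apply Rmin_l].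
    apply Rle_trans with (Rmin (r/2) (x0/2)); [apply Rmin_l|apply Rmin_r].
    apply Rmin_r. }
  set (m := RInt h (x0 - r') (x0 + r')).
  assert (Hm : r' * h x0 <= m).
  { unfold m. apply Rle_trans with (RInt (fun _ => h x0 / 2) (x0 - r') (x0 + r')).
    rewrite RInt_const. unfold scal; simpl; unfold mult; simpl. lra.
    apply RInt_le. lra. apply (ex_RInt_const (V:=R_NormedModule)). apply Hex; lra.
    intros x Hx. specialize (Hr' x ltac:(rabs)). revert Hr'. rabs. }
  assert (Hmp : 0 < m) by nra.
  destruct (Hl (m/2)) as [d [Hd Hd']]; [lra|].
  set (u := Rmin (d/2) ((x0 - r')/2)). set (v := Rmax (1 - d/2) ((1 + x0 + r')/2)).
  assert (Hu : 0 < u /\ u < d /\ u < x0 - r').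
  { unfold u. split; [apply Rmin_glb_lt; lra|split].
    apply Rle_lt_trans with (d/2); [apply Rmin_l|lra].
    apply Rle_lt_trans with ((x0 - r')/2); [apply Rmin_r|lra]. }
  assert (Hv : v < 1 /\ 1 - d < v /\ x0 + r' < v).
  { unfold v. split; [apply Rmax_lub_lt; lra|split].
    apply Rlt_le_trans with (1 - d/2); [lra|apply Rmax_l].
    apply Rlt_le_trans with ((1 + x0 + r')/2); [lra|apply Rmax_r]. }
  destruct (Hd' u v) as [_ A]; try lra.
  assert (m <= RInt h u v).
  { rewrite <- (RInt_Chasles h u (x0 - r') v) by (apply Hex; lra).
    rewrite <- (RInt_Chasles h (x0 - r') (x0 + r') v) by (apply Hex; lra).
    assert (0 <= RInt h u (x0 - r')) by (apply RInt_ge_0; [lra|apply Hex; lra|intros; apply HP; lra]).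
    assert (0 <= RInt h (x0 + r') v) by (apply RInt_ge_0; [lra|apply Hex; lra|intros; apply HP; lra]).
    unfold plus; simpl. fold m. lra. }
  revert A H. generalize (RInt h u v). intros; rabs.
Qed.

Section Wt2.
Variables a b g A B t : R.
Hypotheses (ha : 0 < a) (hb : 0 < b) (hg : 0 < g) (hA : 0 <= A) (hAB : 0 <= A + B)
  (ht0 : 0 < t) (ht1 : t < 1).
Let w := weight a b g A B t.

Lemma template (q dq : R -> R) M :
  (forall x, 0 < x < 1 -> is_derive q x (dq x)) ->
  (forall x, 0 < x < 1 -> continuous dq x) ->
  (forall x, 0 < x < 1 -> Rabs (q x) <= M) ->
  imp2 (fun x => dq x * (x - t) * w x + (a + b + g + 1) * (q x * w x)
     - a * t * (q x * w x / x) - b * (1 - t) * (q x * w x / (1 - x))) 0.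
Proof.
  intros HD HC HM.
  replace 0 with (0 - 0) by ring.
  apply (imp2_deriv (fun x => q x * Sf a b x * hh g A B t x)).
  - intros x Hx.
    apply is_derive_val with (plus (mult (plus (mult (dq x) (Sf a b x)) (mult (q x) (Sf a b x * (a / x - b / (1 - x))))) (hh g A B t x))
       (mult (q x * Sf a b x) ((g + 1) * kf g A B t x))).
    apply (is_derive_mult (fun y => q y * Sf a b y) (hh g A B t)).
    apply (is_derive_mult q (Sf a b)). apply HD; auto. apply Sf_der; auto.
    intros; apply Rmult_comm. apply hh_der; auto. intros; apply Rmult_comm.
    unfold w. rewrite w_eq. unfold hh, plus, mult; simpl. field. lra.
  - intros x Hx. unfold w.
    assert (Cq : continuous q x) by (eapply cont_of_der; apply HD; auto).
    assert (Cw : continuous (weight a b g A B t) x) by (apply w_cont; auto).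
    apply cminus; [apply cminus; [apply cplus|]|].
    + apply cmult; [apply cmult; [apply HC; auto|apply cminus; [apply cid|apply cconst]]|apply Cw].
    + apply cmult; [apply cconst|apply cmult; [apply Cq|apply Cw]].
    + apply cmult; [apply cconst|]. apply cdiv; [apply cmult; [apply Cq|apply Cw]|apply cid|lra].
    + apply cmult; [apply cconst|]. apply cdiv; [apply cmult; [apply Cq|apply Cw]|apply cminus; [apply cconst|apply cid]|lra].
  - intros eps Heps.
    destruct (rpow_small a ha (eps / (Rabs M + 1) / (Cw A B + 1))) as [d [Hd H]].
    { pose proof (Rabs_pos M). pose proof (Cw_nonneg A B hA hAB).
      apply Rdiv_lt_0_compat; [apply Rdiv_lt_0_compat|]; lra. }
    exists (Rmin d 1); split; [apply Rmin_glb_lt; lra|]. intros x Hx.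
    assert (X1 := Rmin_l d 1). assert (X2 := Rmin_r d 1).
    specialize (H x ltac:(lra)). specialize (HM x ltac:(lra)).
    pose proof (Sf_bnd a b ha hb x ltac:(lra)) as [[S0 S1] _].
    pose proof (kf_nonneg g A B t hA hAB x). pose proof (kf_le g A B t hg hA hAB ht0 ht1 x ltac:(lra)).
    pose proof (Rabs_pos M). pose proof (Cw_nonneg A B hA hAB). pose proof (Rabs_pos (q x)).
    unfold hh. rewrite Rminus_0_r.
    rewrite !Rabs_mult. rewrite (Rabs_pos_eq (Sf a b x)) by lra. rewrite (Rabs_pos_eq (kf _ _ _ _ x)) by lra.
    assert (Rabs (x - t) <= 1) by rabs.
    apply Rle_lt_trans with ((Rabs M + 1) * (Cw A B + 1) * rpow x a).
    { assert (Rabs (q x) * Sf a b x <= (Rabs M + 1) * rpow x a).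
      { apply Rmult_le_compat; try lra. pose proof (Rle_abs M); lra. }
      assert (Rabs (x - t) * kf g A B t x <= Cw A B + 1).
      { pose proof (Rabs_pos (x - t)). nra. }
      pose proof (rpow_nonneg x a ltac:(lra)).
      assert (0 <= Rabs (x - t) * kf g A B t x) by (apply Rmult_le_pos; auto; apply Rabs_pos).
      replace ((Rabs M + 1) * (Cw A B + 1) * rpow x a) with (((Rabs M + 1) * rpow x a) * (Cw A B + 1)) by ring.
      apply Rmult_le_compat; [apply Rmult_le_pos; lra | exact H9 | exact H6 | exact H7]. }
    replace eps with ((Rabs M + 1) * (Cw A B + 1) * (eps / (Rabs M + 1) / (Cw A B + 1))) by (field; lra).
    apply Rmult_lt_compat_l; auto. nra.
  - intros eps Heps.
    destruct (rpow_small b hb (eps / (Rabs M + 1) / (Cw A B + 1))) as [d [Hd H]].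
    { pose proof (Rabs_pos M). pose proof (Cw_nonneg A B hA hAB).
      apply Rdiv_lt_0_compat; [apply Rdiv_lt_0_compat|]; lra. }
    exists (Rmin d 1); split; [apply Rmin_glb_lt; lra|]. intros x Hx.
    assert (X1 := Rmin_l d 1). assert (X2 := Rmin_r d 1).
    specialize (H (1 - x) ltac:(lra)). specialize (HM x ltac:(lra)).
    pose proof (Sf_bnd a b ha hb x ltac:(lra)) as [[S0 _] S1].
    pose proof (kf_nonneg g A B t hA hAB x). pose proof (kf_le g A B t hg hA hAB ht0 ht1 x ltac:(lra)).
    pose proof (Rabs_pos M). pose proof (Cw_nonneg A B hA hAB). pose proof (Rabs_pos (q x)).
    unfold hh. rewrite Rminus_0_r.
    rewrite !Rabs_mult. rewrite (Rabs_pos_eq (Sf a b x)) by lra. rewrite (Rabs_pos_eq (kf _ _ _ _ x)) by lra.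
    assert (Rabs (x - t) <= 1) by rabs.
    apply Rle_lt_trans with ((Rabs M + 1) * (Cw A B + 1) * rpow (1 - x) b).
    { assert (Rabs (q x) * Sf a b x <= (Rabs M + 1) * rpow (1 - x) b).
      { apply Rmult_le_compat; try lra. pose proof (Rle_abs M); lra. }
      assert (Rabs (x - t) * kf g A B t x <= Cw A B + 1).
      { pose proof (Rabs_pos (x - t)). nra. }
      pose proof (rpow_nonneg (1 - x) b ltac:(lra)).
      assert (0 <= Rabs (x - t) * kf g A B t x) by (apply Rmult_le_pos; auto; apply Rabs_pos).
      replace ((Rabs M + 1) * (Cw A B + 1) * rpow (1 - x) b) with (((Rabs M + 1) * rpow (1 - x) b) * (Cw A B + 1)) by ring.
      apply Rmult_le_compat; [apply Rmult_le_pos; lra | exact H9 | exact H6 | exact H7]. }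
    replace eps with ((Rabs M + 1) * (Cw A B + 1) * (eps / (Rabs M + 1) / (Cw A B + 1))) by (field; lra).
    apply Rmult_lt_compat_l; auto. nra.
Qed.

End Wt2.

Section Wt3.
Variables a b g A B t : R.
Hypotheses (ha : 0 < a) (hb : 0 < b) (hg : 0 < g) (hA : 0 <= A) (hAB : 0 <= A + B)
  (ht0 : 0 < t) (ht1 : t < 1).
Let w := weight a b g A B t.

Definition gd x := rpow x a / x + rpow (1 - x) b / (1 - x).
Definition G0 x := exp (a * ln x) / a - exp (b * ln (1 - x)) / b.

Lemma G0_der x : 0 < x < 1 -> is_derive G0 x (gd x).
Proof. intros H. unfold G0, gd. auto_derive. lra.
  rewrite !rpow_pos by lra. change (1 + - x) with (1 - x). field. lra. Qed.

Lemma gd_loc x : 0 < x < 1 -> locally x (fun y => exp (a * ln y) / y + exp (b * ln (1 - y)) / (1 - y) = gd y).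
Proof.
  intros H. apply (locally_ball x (Rmin x (1 - x))). apply Rmin_glb_lt; lra.
  intros y Hy. assert (X1 := Rmin_l x (1 - x)). assert (X2 := Rmin_r x (1 - x)).
  assert (0 < y < 1) by rabs. unfold gd. rewrite !rpow_pos by lra. reflexivity.
Qed.
Lemma gd_cont x : 0 < x < 1 -> continuous gd x.
Proof. intros H. apply (cont_ext_loc _ _ _ (gd_loc x H)). eapply cont_of_der. auto_derive. lra. reflexivity. Qed.

Lemma gd_int : exists lg, imp2 gd lg.
Proof.
  exists ((exp (a * ln 1) / a - 0) - (0 - exp (b * ln (1 - 0)) / b)).
  apply (imp2_deriv G0 gd). apply G0_der. apply gd_cont.
  - unfold G0. apply (lim0_plus (fun x => exp (a * ln x) / a) (fun x => - (exp (b * ln (1 - x)) / b)) 0).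
    + intros eps Heps. destruct (rpow_small a ha (eps * a)) as [d [Hd H]]. nra.
      exists d; split; auto. intros x Hx. specialize (H x ltac:(lra)). rewrite rpow_pos in H by lra.
      rewrite Rminus_0_r. rewrite Rabs_pos_eq. apply Rmult_lt_reg_r with a; auto. unfold Rdiv.
      rewrite Rmult_assoc, Rinv_l; lra. left; apply Rdiv_lt_0_compat; auto; apply exp_pos.
    + replace (- (exp (b * ln (1 - 0)) / b)) with ((fun x => - (exp (b * ln (1 - x)) / b)) 0) by reflexivity.
      apply lim0_cont. eapply cont_of_der. auto_derive. lra. reflexivity.
  - unfold G0. apply (lim1_plus (fun x => exp (a * ln x) / a) (fun x => - (exp (b * ln (1 - x)) / b))).
    + replace (exp (a * ln 1) / a) with ((fun x => exp (a * ln x) / a) 1) by reflexivity.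
      apply lim1_cont. eapply cont_of_der. auto_derive. lra. reflexivity.
    + intros eps Heps. destruct (rpow_small b hb (eps * b)) as [d [Hd H]]. nra.
      exists d; split; auto. intros x Hx. specialize (H (1 - x) ltac:(lra)). rewrite rpow_pos in H by lra.
      replace (- (exp (b * ln (1 - x)) / b) - - 0) with (- (exp (b * ln (1 - x)) / b)) by ring. rewrite Rabs_Ropp. rewrite Rabs_pos_eq. apply Rmult_lt_reg_r with b; auto. unfold Rdiv.
      rewrite Rmult_assoc, Rinv_l; lra. left; apply Rdiv_lt_0_compat; auto; apply exp_pos.
Qed.

Lemma gd_bnd : forall u v, 0 < u -> u < v -> v < 1 -> RInt gd u v <= 1 / a + 1 / b.
Proof.
  intros u v Hu Huv Hv.
  assert (I : is_RInt gd u v (minus (G0 v) (G0 u))).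
  { apply (is_RInt_derive G0 gd); rewrite Rmin_left by lra; rewrite Rmax_right by lra;
      intros; [apply G0_der|apply gd_cont]; lra. }
  rewrite (is_RInt_unique _ _ _ _ I). unfold minus, plus, opp; simpl. unfold G0.
  pose proof (rpow_le1 v a ltac:(lra) ha). pose proof (rpow_le1 (1 - u) b ltac:(lra) hb).
  rewrite !rpow_pos in * by lra.
  pose proof (exp_pos (a * ln u)). pose proof (exp_pos (b * ln (1 - v))).
  assert (exp (a * ln v) / a <= 1 / a) by (apply Rmult_le_compat_r; [left; apply Rinv_0_lt_compat|]; lra).
  assert (exp (b * ln (1 - u)) / b <= 1 / b) by (apply Rmult_le_compat_r; [left; apply Rinv_0_lt_compat|]; lra).
  assert (0 <= exp (a * ln u) / a) by (left; apply Rdiv_lt_0_compat; lra).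
  assert (0 <= exp (b * ln (1 - v)) / b) by (left; apply Rdiv_lt_0_compat; lra).
  lra.
Qed.

Lemma w_abs x : 0 < x < 1 -> 0 <= w x /\ w x <= Cw A B * Sf a b x.
Proof. intros H. unfold w. rewrite w_eq.
  pose proof (Sf_bnd a b ha hb x ltac:(lra)) as [[S0 S1] _].
  pose proof (kf_nonneg g A B t hA hAB x). pose proof (kf_le g A B t hg hA hAB ht0 ht1 x ltac:(lra)).
  split. nra. nra. Qed.

Lemma ex_gen (q e : R -> R) M :
  (forall x, 0 < x < 1 -> continuous q x) ->
  (forall x, 0 < x < 1 -> continuous e x) ->
  (forall x, 0 < x < 1 -> Rabs (q x) <= M) ->
  (forall x, 0 < x < 1 -> Rabs (w x * e x) <= Cw A B * gd x) ->
  exists l, imp2 (fun x => q x * w x * e x) l.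
Proof.
  intros Cq Ce HM He. destruct gd_int as [lg Hg].
  apply (imp2_dom _ gd (Rabs M * Cw A B) lg (1/a + 1/b)).
  - intros x Hx. apply cmult; [apply cmult|]; auto. apply w_cont; auto.
  - apply gd_cont.
  - apply Rmult_le_pos. apply Rabs_pos. apply Cw_nonneg; auto.
  - intros x Hx. rewrite Rmult_assoc, Rabs_mult, Rmult_assoc.
    apply Rmult_le_compat; try apply Rabs_pos. specialize (HM x Hx). pose proof (Rle_abs M); lra. auto.
  - auto.
  - apply gd_bnd.
Qed.

Lemma rpow_div_ge x e : 0 < x < 1 -> rpow x e <= rpow x e / x.
Proof. intros H. pose proof (rpow_nonneg x e ltac:(lra)).
  unfold Rdiv. rewrite <- (Rmult_1_r (rpow x e)) at 1. apply Rmult_le_compat_l; auto.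
  rewrite <- Rinv_1. apply Rinv_le_contravar; lra. Qed.

Lemma gd_ge x : 0 < x < 1 -> rpow x a / x <= gd x /\ rpow (1 - x) b / (1 - x) <= gd x.
Proof. intros H. unfold gd.
  assert (0 <= rpow x a / x) by (apply Rdiv_le_0_compat; [apply rpow_nonneg|]; lra).
  assert (0 <= rpow (1 - x) b / (1 - x)) by (apply Rdiv_le_0_compat; [apply rpow_nonneg|]; lra).
  lra. Qed.

Lemma ex0 (q : R -> R) M : (forall x, 0 < x < 1 -> continuous q x) ->
  (forall x, 0 < x < 1 -> Rabs (q x) <= M) -> exists l, imp2 (fun x => q x * w x) l.
Proof.
  intros Cq HM. destruct (ex_gen q (fun _ => 1) M) as [l Hl]; auto.
  - intros; apply cconst.
  - intros x Hx. destruct (w_abs x Hx). rewrite Rmult_1_r, Rabs_pos_eq by auto.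
    pose proof (Sf_bnd a b ha hb x ltac:(lra)) as [[S0 S1] _].
    pose proof (rpow_div_ge x a Hx). pose proof (gd_ge x Hx). pose proof (Cw_nonneg A B hA hAB).
    apply Rle_trans with (Cw A B * Sf a b x); auto. apply Rmult_le_compat_l; auto. lra.
  - exists l. eapply imp2_ext; [|exact Hl]. intros; simpl; ring.
Qed.

Lemma exy (q : R -> R) M : (forall x, 0 < x < 1 -> continuous q x) ->
  (forall x, 0 < x < 1 -> Rabs (q x) <= M) -> exists l, imp2 (fun x => q x * w x / x) l.
Proof.
  intros Cq HM. destruct (ex_gen q (fun x => / x) M) as [l Hl]; auto.
  - intros. apply cinv. apply cid. lra.
  - intros x Hx. destruct (w_abs x Hx).
    assert (0 < / x) by (apply Rinv_0_lt_compat; lra).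
    rewrite Rabs_pos_eq by nra.
    pose proof (Sf_bnd a b ha hb x ltac:(lra)) as [[S0 S1] _].
    pose proof (gd_ge x Hx). pose proof (Cw_nonneg A B hA hAB).
    apply Rle_trans with (Cw A B * (rpow x a / x)). unfold Rdiv. rewrite <- Rmult_assoc. apply Rmult_le_compat_r; [lra|]. nra.
    apply Rmult_le_compat_l; auto. lra.
  - exists l. exact Hl.
Qed.

Lemma ex1 (q : R -> R) M : (forall x, 0 < x < 1 -> continuous q x) ->
  (forall x, 0 < x < 1 -> Rabs (q x) <= M) -> exists l, imp2 (fun x => q x * w x / (1 - x)) l.
Proof.
  intros Cq HM. destruct (ex_gen q (fun x => / (1 - x)) M) as [l Hl]; auto.
  - intros. apply cinv. apply cminus; [apply cconst|apply cid]. lra.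
  - intros x Hx. destruct (w_abs x Hx).
    assert (0 < / (1 - x)) by (apply Rinv_0_lt_compat; lra).
    rewrite Rabs_pos_eq by nra.
    pose proof (Sf_bnd a b ha hb x ltac:(lra)) as [[S0 _] S1].
    pose proof (gd_ge x Hx). pose proof (Cw_nonneg A B hA hAB).
    apply Rle_trans with (Cw A B * (rpow (1 - x) b / (1 - x))). unfold Rdiv. rewrite <- Rmult_assoc. apply Rmult_le_compat_r; [lra|]. nra.
    apply Rmult_le_compat_l; auto. lra.
  - exists l. exact Hl.
Qed.

Lemma w_pos_left x : 0 < A -> 0 < x < t -> 0 < w x.
Proof. intros HA' Hx. unfold w, weight.
  rewrite !rpow_pos by (try rewrite Rabs_left; lra).
  destruct (hv_vals (x - t)) as [[_ ?]|[-> _]]; [lra|].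
  repeat apply Rmult_lt_0_compat; try apply exp_pos. lra. Qed.
Lemma w_pos_right x : 0 < A + B -> t < x < 1 -> 0 < w x.
Proof. intros HA' Hx. unfold w, weight.
  rewrite !rpow_pos by (try rewrite Rabs_right; lra).
  destruct (hv_vals (x - t)) as [[-> _]|[_ ?]]; [|lra].
  repeat apply Rmult_lt_0_compat; try apply exp_pos. lra. Qed.

End Wt3.

From mathcomp Require all_boot all_algebra Rstruct ring.

Module MC.
Import all_boot all_algebra Rstruct.
Import GRing.Theory.
Import Defs.


Lemma der_plus (f g : R -> R) x df dg : is_derive f x df -> is_derive g x dg -> is_derive (fun y => f y + g y) x (df + dg).
Proof. intros H1 H2. exact (is_derive_plus f g x df dg H1 H2). Qed.
Lemma der_mult (f g : R -> R) x df dg : is_derive f x df -> is_derive g x dg -> is_derive (fun y => f y * g y) x (df * g x + f x * dg).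
Proof. intros H1 H2. exact (is_derive_mult f g x df dg H1 H2 Rmult_comm). Qed.
Lemma der_const (c x : R) : is_derive (fun _ => c) x 0.
Proof. exact (is_derive_const (K:=R_AbsRing) c x). Qed.
Lemma der_id (x : R) : is_derive (fun y => y) x 1.
Proof. exact (is_derive_id (K:=R_AbsRing) x). Qed.

Lemma horner_der (q : {poly R}) x : is_derive (fun y => q.[y]%R) x (q^`().[x])%R.
Proof.
  elim/poly_ind: q => [|p c IH].
  - apply is_derive_ext with (fun _ => 0). intros; rewrite horner0; reflexivity.
    rewrite deriv0 horner0. apply der_const.
  - apply is_derive_ext with (fun y => p.[y]%R * y + c).
    intros; rewrite hornerMXaddC; reflexivity.
    rewrite derivMXaddC hornerD hornerM hornerX.
    apply is_derive_val with (((p^`().[x])%R * x + (p.[x])%R * 1) + 0).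
    apply (der_plus (fun y => p.[y]%R * y) (fun _ => c)).
    apply (der_mult (fun y => p.[y]%R) (fun y => y)). exact IH. apply der_id. apply der_const.
    change (GRing.add (p.[x])%R (GRing.mul (p^`().[x])%R x)) with (p.[x]%R + (p^`().[x])%R * x). match goal with |- ?u = ?v => change (@eq R u v) end; ring.
Qed.

Lemma horner_cont (q : {poly R}) x : continuous (fun y => q.[y]%R) x.
Proof. eapply cont_of_der. apply horner_der. Qed.

Lemma horner_bnd (q : {poly R}) : exists M, forall x, -1 <= x <= 1 -> Rabs (q.[x]%R) <= M.
Proof.
  elim/poly_ind: q => [|p c [M IH]].
  - exists 0. intros; rewrite horner0 Rabs_R0; lra.
  - exists (Rabs M + Rabs c). intros x Hx. rewrite hornerMXaddC.
    change (GRing.add (GRing.mul (p.[x])%R x) c) with (p.[x]%R * x + c).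
    eapply Rle_trans. apply Rabs_triang. rewrite Rabs_mult.
    specialize (IH x Hx). pose proof (Rle_abs M). pose proof (Rabs_pos (p.[x])%R).
    assert (Rabs x <= 1) by rabs. pose proof (Rabs_pos x). nra.
Qed.

Lemma addRE (x y : R) : GRing.add x y = x + y. reflexivity. Qed.
Lemma mulRE (x y : R) : GRing.mul x y = x * y. reflexivity. Qed.
Ltac hset := repeat match goal with |- context [@horner _ ?p ?x] => let u := fresh "u" in set u := (horner p x) end.
Ltac toR := match goal with |- ?u = ?v => change (@eq R u v) end.

Lemma nonroot (p : {poly R}) c d : (p != 0)%R -> c < d -> exists x, c < x < d /\ p.[x]%R <> 0.
Proof.
  move=> Hp Hcd. apply Classical_Prop.NNPP => N.
  set rs := map (fun k : nat => c + (d - c) / (INR k + 2)) (iota 0 (size p)).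
  have Hin : forall k : nat, c < c + (d - c) / (INR k + 2) < d.
  { move=> k. have := pos_INR k => Hk. split.
    - have : 0 < (d - c) / (INR k + 2) by apply Rdiv_lt_0_compat; lra. lra.
    - have : (d - c) / (INR k + 2) < d - c; [|lra].
      apply (Rmult_lt_reg_r (INR k + 2)); [lra|]. unfold Rdiv. rewrite Rmult_assoc Rinv_l; nra. }
  have Hall : all (root p) rs.
  { apply/allP => x /mapP [k _ ->]. apply/eqP. apply Classical_Prop.NNPP => Hne.
    apply: N. exists (c + (d - c) / (INR k + 2)). split; [apply Hin|exact Hne]. }
  have Huniq : uniq rs.
  { rewrite map_inj_uniq ?iota_uniq // => k1 k2 E.
    have : (d - c) / (INR k1 + 2) = (d - c) / (INR k2 + 2) by lra.
    move=> E2. have := pos_INR k1. have := pos_INR k2. move=> H2 H1.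
    have E3 : INR k1 + 2 = INR k2 + 2.
    { have E4 : / (INR k1 + 2) = / (INR k2 + 2).
      { apply (Rmult_eq_reg_l (d - c)); [|lra]. exact E2. }
      rewrite -(Rinv_inv (INR k1 + 2)) -(Rinv_inv (INR k2 + 2)) E4. reflexivity. }
    apply INR_eq. lra. }
  have := max_poly_roots Hp Hall Huniq. by rewrite size_map size_iota ltnn.
Qed.

Section Polys.
Variables a b g A B t : R.
Hypotheses (ha : 0 < a) (hb : 0 < b) (hg : 0 < g) (hA : 0 <= A) (hAB : 0 <= A + B)
  (ht0 : 0 < t) (ht1 : t < 1).
Let w := weight a b g A B t.

Definition L0 (q : {poly R}) := Int01 (fun x => q.[x]%R * w x).
Definition Ly (q : {poly R}) := Int01 (fun x => q.[x]%R * w x / x).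
Definition L1 (q : {poly R}) := Int01 (fun x => q.[x]%R * w x / (1 - x)).

Lemma imp_L0 q : imp2 (fun x => q.[x]%R * w x) (L0 q).
Proof. destruct (horner_bnd q) as [M HM].
  destruct (ex0 a b g A B t ha hb hg hA hAB ht0 ht1 (fun x => q.[x]%R) M) as [l Hl].
  intros; apply horner_cont. intros; apply HM; lra.
  unfold L0. fold w in Hl. rewrite (Int01_eq _ _ Hl). exact Hl. Qed.
Lemma imp_Ly q : imp2 (fun x => q.[x]%R * w x / x) (Ly q).
Proof. destruct (horner_bnd q) as [M HM].
  destruct (exy a b g A B t ha hb hg hA hAB ht0 ht1 (fun x => q.[x]%R) M) as [l Hl].
  intros; apply horner_cont. intros; apply HM; lra.
  unfold Ly. fold w in Hl. rewrite (Int01_eq _ _ Hl). exact Hl. Qed.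
Lemma imp_L1 q : imp2 (fun x => q.[x]%R * w x / (1 - x)) (L1 q).
Proof. destruct (horner_bnd q) as [M HM].
  destruct (ex1 a b g A B t ha hb hg hA hAB ht0 ht1 (fun x => q.[x]%R) M) as [l Hl].
  intros; apply horner_cont. intros; apply HM; lra.
  unfold L1. fold w in Hl. rewrite (Int01_eq _ _ Hl). exact Hl. Qed.

Lemma L0D p q : L0 (p + q) = L0 p + L0 q.
Proof. apply Int01_eq. eapply imp2_ext; [|apply imp2_plus; [apply (imp_L0 p)|apply (imp_L0 q)]].
  intros x _; cbv beta. rewrite hornerD addRE. hset. ring. Qed.
Lemma L0Z k p : L0 (k *: p) = k * L0 p.
Proof. apply Int01_eq. eapply imp2_ext; [|apply imp2_scal; apply (imp_L0 p)].
  intros x _; cbv beta. rewrite hornerZ. change (GRing.mul k p.[x]%R) with (k * p.[x]%R). hset; toR; ring. Qed.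
Lemma L0N p : L0 (- p) = - L0 p.
Proof. replace (- L0 p) with (-1 * L0 p) by ring. apply Int01_eq. eapply imp2_ext; [|apply (imp2_scal (-1)); apply (imp_L0 p)].
  intros x _; cbv beta. rewrite hornerN. change (GRing.opp p.[x]%R) with (- p.[x]%R). hset; toR; ring. Qed.
Lemma L0B p q : L0 (p - q) = L0 p - L0 q.
Proof. rewrite L0D L0N. reflexivity. Qed.
Lemma L00 : L0 0 = 0.
Proof. transitivity (0 * L0 0); [|ring]. apply Int01_eq. eapply imp2_ext; [|apply (imp2_scal 0); apply (imp_L0 0)].
  intros x _; cbv beta. rewrite horner0. change (@GRing.zero _) with 0. toR; ring. Qed.

Lemma Ly_X q : Ly ('X * q) = L0 q.
Proof. apply Int01_eq. eapply imp2_ext; [|apply imp_L0].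
  intros x Hx; cbv beta. rewrite hornerM hornerX. change (GRing.mul x q.[x]%R) with (x * q.[x]%R). hset; toR; field. lra. Qed.
Lemma L1_X q : L1 ('X * q) = L1 q - L0 q.
Proof. replace (L1 q - L0 q) with (L1 q + (-1) * L0 q) by ring.
  apply Int01_eq. eapply imp2_ext; [|apply imp2_plus; [apply (imp_L1 q)|apply (imp2_scal (-1)); apply (imp_L0 q)]].
  intros x Hx; cbv beta. rewrite hornerM hornerX. change (GRing.mul x q.[x]%R) with (x * q.[x]%R). hset; toR; field. lra. Qed.

Lemma template_poly Q :
  L0 (Q^`() * ('X - t%:P)) + (a + b + g + 1) * L0 Q - a * t * Ly Q - b * (1 - t) * L1 Q = 0.
Proof.
  destruct (horner_bnd Q) as [M HM].
  assert (T := template a b g A B t ha hb hg hA hAB ht0 ht1 (fun x => Q.[x]%R) (fun x => Q^`().[x]%R) M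
     (fun x _ => horner_der Q x) (fun x _ => horner_cont _ x) (fun x Hx => HM x ltac:(lra))).
  fold w in T.
  transitivity (L0 (Q^`() * ('X - t%:P)) + (a + b + g + 1) * L0 Q + (-(a * t)) * Ly Q + (-(b * (1 - t))) * L1 Q); [ring|].
  eapply imp2_unique; [|exact T].
  eapply imp2_ext; [|apply imp2_plus; [apply imp2_plus; [apply imp2_plus|]|]].
  2: apply (imp_L0 (Q^`() * ('X - t%:P))).
  2: apply imp2_scal; apply (imp_L0 Q).
  2: apply imp2_scal; apply (imp_Ly Q).
  2: apply imp2_scal; apply (imp_L1 Q).
  intros x Hx; cbv beta. rewrite hornerM hornerD hornerN hornerX hornerC.
  change (GRing.mul Q^`().[x]%R (GRing.add x (GRing.opp t))) with (Q^`().[x]%R * (x - t)). hset; toR; ring.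
Qed.

Lemma L0_pos (P : {poly R}) : ~ (A = 0 /\ A + B = 0) -> (P != 0)%R -> 0 < L0 (P * P).
Proof.
  intros Hnz HP.
  assert (Hx0 : exists x0, 0 < x0 < 1 /\ P.[x0]%R <> 0 /\ 0 < w x0).
  { destruct (Req_dec A 0) as [E|E].
    - assert (0 < A + B) by lra.
      destruct (nonroot P t 1 HP ht1) as [x0 [H1 H2]]. exists x0. split; [lra|split; auto].
      apply w_pos_right; auto; lra.
    - destruct (nonroot P 0 t HP ht0) as [x0 [H1 H2]]. exists x0. split; [lra|split; auto].
      apply w_pos_left; auto; lra. }
  destruct Hx0 as [x0 [Hx0 [HP0 Hw0]]].
  apply (imp2_pos (fun x => (P * P).[x]%R * w x) _ x0); auto.
  - intros x Hx. apply cmult. apply horner_cont. apply w_cont; auto.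
  - intros x Hx. rewrite hornerM. change (GRing.mul P.[x]%R P.[x]%R) with (P.[x]%R * P.[x]%R).
    apply Rmult_le_pos. apply Rle_0_sqr. apply (w_abs a b g A B t); auto.
  - rewrite hornerM. change (GRing.mul P.[x0]%R P.[x0]%R) with (P.[x0]%R * P.[x0]%R).
    apply Rmult_lt_0_compat; auto. apply Rsqr_pos_lt; auto.
  - apply imp_L0.
Qed.

End Polys.

Lemma oppRE (x : R) : GRing.opp x = - x. reflexivity. Qed.
Lemma natmulRE (x : R) n : (x *+ n)%R = x * INR n.
Proof. elim: n => [|n IH]. rewrite mulr0n /=. symmetry; apply Rmult_0_r.
  rewrite mulrSr IH S_INR addRE Rmult_plus_distr_l Rmult_1_r. reflexivity. Qed.
Lemma oneRE : (1%R : R) = 1. reflexivity. Qed.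
Lemma zeroRE : (0%R : R) = 0. reflexivity. Qed.

Section Orth.
Variable (c : nat -> nat -> R).
Hypothesis (hcn : forall n, c n n = 1).
Local Open Scope ring_scope.

Definition Pn n : {poly R} := \poly_(k < n.+1) c n k.
Definition pp n := match n with 0%nat => 0 | S k => c (S k) k end.

Lemma coefP n k : (Pn n)`_k = if (k <= n)%N then c n k else 0.
Proof. rewrite /Pn coef_poly. reflexivity. Qed.
Lemma coefP_top n : (Pn n)`_n = 1.
Proof. rewrite coefP leqnn. apply hcn. Qed.
Lemma coefP_out n k : (n < k)%N -> (Pn n)`_k = 0.
Proof. move=> H. rewrite coefP. have -> : (k <= n)%N = false by apply/negbTE; rewrite -ltnNge. reflexivity. Qed.
Lemma coefP_sub n : (Pn n.+1)`_n = pp n.+1.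
Proof. rewrite coefP leqnSn. reflexivity. Qed.

Lemma size_Pn n : size (Pn n) = n.+1.
Proof. rewrite /Pn size_poly_eq //= hcn. exact: oner_neq0. Qed.
Lemma Pn_neq0 n : (Pn n != 0)%R.
Proof. by rewrite -size_poly_eq0 size_Pn. Qed.

Lemma sumf_big (f : nat -> R) n : sum_f_R0 f n = (\sum_(i < n.+1) f i)%R.
Proof. elim: n => [|n IH]. by rewrite big_ord_recr big_ord0 /= add0r.
  rewrite big_ord_recr /= -IH. reflexivity. Qed.
Lemma powRE (x : R) (k : nat) : pow x k = (x ^+ k)%R.
Proof. elim: k => [|k IH]. reflexivity. rewrite exprS /= IH. reflexivity. Qed.

Lemma peval_Pn n x : peval c n x = (Pn n).[x]%R.
Proof. rewrite /peval /Pn horner_poly sumf_big. apply: eq_bigr => i _. by rewrite powRE. Qed.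


Lemma size_reduce (q p : {poly R}) m : (size q <= m.+1)%N -> (size p <= m.+1)%N -> p`_m = 1 ->
  (size (q - q`_m *: p)%R <= m)%N.
Proof.
  move=> Hq Hp Hm. apply/leq_sizeP => j Hj. rewrite coefB coefZ.
  case: (ltngtP j m) => Hjm.
  - by move: Hj; rewrite leqNgt Hjm.
  - move/leq_sizeP: Hq => Hq. move/leq_sizeP: Hp => Hp. by rewrite (Hq j) // (Hp j) // mulr0 subrr.
  - by rewrite Hjm Hm mulr1 subrr.
Qed.

Variables a b g A B t : R.
Hypotheses (ha : Rlt 0 a) (hb : Rlt 0 b) (hg : Rlt 0 g) (hA : Rle 0 A) (hAB : Rle 0 (Rplus A B))
  (ht0 : Rlt 0 t) (ht1 : Rlt t 1).
Hypothesis horth : forall m n, m <> n -> Int01 (fun x => peval c m x * peval c n x * weight a b g A B t x) = 0.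

Let L := L0 a b g A B t.
Definition hh' n := L (Pn n * Pn n).

Lemma orthP m n : m <> n -> L (Pn m * Pn n) = 0.
Proof. move=> H. rewrite /L /L0 -(horth m n H). f_equal. apply functional_extensionality => x.
  by rewrite !peval_Pn hornerM. Qed.

Lemma Lmul_split (q p P : {poly R}) k : L (q * P) = Rplus (L ((q - k *: p) * P)) (Rmult k (L (p * P))).
Proof. rewrite /L -(L0Z a b g A B t ha hb hg hA hAB ht0 ht1) -(L0D a b g A B t ha hb hg hA hAB ht0 ht1).
  congr L0. rewrite scalerAl -mulrDl subrK. reflexivity. Qed.

Lemma orth_low n (q : {poly R}) : (size q <= n)%N -> L (q * Pn n) = 0.
Proof.
  have : forall k, (k <= n)%N -> forall q : {poly R}, (size q <= k)%N -> L (q * Pn n) = 0.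
  { elim => [|k IH] Hk q0 Hq0.
    - move/size_poly_leq0P: Hq0 => ->. rewrite mul0r. apply: (L00 a b g A B t ha hb hg hA hAB ht0 ht1).
    - rewrite (Lmul_split q0 (Pn k) (Pn n) (q0`_k)) IH //; last first.
      + apply: size_reduce => //. by rewrite size_Pn. by rewrite coefP_top.
      + exact: ltnW.
      + rewrite orthP. rewrite Rmult_0_r Rplus_0_l. reflexivity.
        move=> E. move: Hk. by rewrite E ltnn. }
  move=> H Hq. exact: (H n (leqnn n) q Hq).
Qed.

Lemma orth_coef n (q : {poly R}) : (size q <= n.+1)%N -> L (q * Pn n) = q`_n * hh' n.
Proof.
  move=> Hq. rewrite (Lmul_split q (Pn n) (Pn n) (q`_n)) orth_low.
  rewrite Rplus_0_l. reflexivity. apply: size_reduce => //. by rewrite size_Pn. by rewrite coefP_top.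
Qed.

Lemma orth_coef2 n (q : {poly R}) : (size q <= n.+2)%N -> L (q * Pn n) = (q`_n - q`_n.+1 * pp n.+1) * hh' n.
Proof.
  move=> Hq. rewrite (Lmul_split q (Pn n.+1) (Pn n) (q`_n.+1)) orthP; last by lia.
  rewrite Rmult_0_r Rplus_0_r orth_coef.
  rewrite coefB coefZ coefP_sub. reflexivity.
  apply: size_reduce => //. by rewrite size_Pn. by rewrite coefP_top.
Qed.

End Orth.

Section Main.
Import ring.
Variable (c : nat -> nat -> R).
Hypothesis (hcn : forall n, c n n = 1).
Variables a b g A B t : R.
Hypotheses (ha : Rlt 0 a) (hb : Rlt 0 b) (hg : Rlt 0 g) (hA : Rle 0 A) (hAB : Rle 0 (Rplus A B))
  (ht0 : Rlt 0 t) (ht1 : Rlt t 1).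
Hypothesis horth : forall m n, m <> n -> Int01 (fun x => peval c m x * peval c n x * weight a b g A B t x) = 0.
Local Open Scope ring_scope.

Let L := L0 a b g A B t.
Local Notation P := (Pn c).
Let cPt n : (P n)`_n = 1 := coefP_top c hcn n.

Lemma coef_XtD (p : {poly R}) k : (('X - t%:P) * p^`())`_k = p`_k *+ k - t * (p`_k.+1 *+ k.+1).
Proof. rewrite mulrBl coefB coefXM mul_polyC coefZ !coef_deriv. case: k => [|k] /=.
  by rewrite mulr0n. by []. Qed.
Lemma coef_XtP (p : {poly R}) k : (('X - t%:P) * p)`_k = (if k is k'.+1 then p`_k' else 0) - t * p`_k.
Proof. rewrite mulrBl coefB coefXM mul_polyC coefZ. by case: k. Qed.
Lemma coef_XtXD (p : {poly R}) k : (('X - t%:P) * ('X * p^`()))`_k =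
   (if k is k'.+1 then p`_k' *+ k' else 0) - t * (p`_k *+ k).
Proof. rewrite mulrBl coefB mul_polyC coefZ !coefXM. case: k => [|k] /=.
  by rewrite !mulr0n. rewrite !coef_deriv. by case: k => [|k] //=. Qed.
Lemma coef_XP (p : {poly R}) k : ('X * p)`_k = (if k is k'.+1 then p`_k' else 0).
Proof. rewrite coefXM. by case: k. Qed.

Lemma size_XtD n : (size (('X - t%:P) * (P n)^`())%R <= n.+1)%N.
Proof. apply/leq_sizeP => j Hj. rewrite coef_XtD !coefP_out //; try lia. by rewrite !mul0rn mulr0 subrr. Qed.
Lemma size_XtP n : (size (('X - t%:P) * P n)%R <= n.+2)%N.
Proof. apply/leq_sizeP => j Hj. rewrite coef_XtP. case: j Hj => [|j] Hj //. rewrite !coefP_out //; try lia.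
  by rewrite mulr0 subrr. Qed.
Lemma size_XtXD n : (size (('X - t%:P) * ('X * (P n)^`()))%R <= n.+2)%N.
Proof. apply/leq_sizeP => j Hj. rewrite coef_XtXD. case: j Hj => [|j] Hj //. rewrite !coefP_out //; try lia.
  by rewrite !mul0rn mulr0 subrr. Qed.
Lemma size_XP n : (size ('X * P n)%R <= n.+2)%N.
Proof. apply/leq_sizeP => j Hj. rewrite coef_XP. case: j Hj => [|j] Hj //. rewrite !coefP_out //; lia. Qed.


Lemma polyE_off n m : (P n * P m)^`() * ('X - t%:P) =
  (('X - t%:P) * (P n)^`()) * P m + (('X - t%:P) * (P m)^`()) * P n.
Proof. rewrite derivM. ring. Qed.
Lemma polyE_diag j : ('X * (P j * P j))^`() * ('X - t%:P) =
  (('X - t%:P) * P j + (('X - t%:P) * ('X * (P j)^`())) *+ 2) * P j.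
Proof. rewrite !derivM derivX. ring. Qed.

Lemma cOD_m m : (('X - t%:P) * (P m.+1)^`())`_m = pp c m.+1 *+ m - t * (1 *+ m.+1).
Proof. rewrite coef_XtD coefP_sub cPt. reflexivity. Qed.
Lemma cOD_m1 m : (('X - t%:P) * (P m.+1)^`())`_m.+1 = 1 *+ m.+1.
Proof. rewrite coef_XtD cPt coefP_out //. by rewrite mul0rn mulr0 subr0. Qed.

Lemma cDG_j j : (('X - t%:P) * P j + (('X - t%:P) * ('X * (P j)^`())) *+ 2)`_j =
  pp c j - t + (pp c j *+ j.-1 - t * (1 *+ j)) *+ 2.
Proof. rewrite coefD coefMn coef_XtP coef_XtXD cPt. case: j => [|j] /=.
  by rewrite mulr1 mulr0n. by rewrite coefP_sub mulr1. Qed.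
Lemma cDG_j1 j : (('X - t%:P) * P j + (('X - t%:P) * ('X * (P j)^`())) *+ 2)`_j.+1 =
  1 + (1 *+ j) *+ 2.
Proof. rewrite coefD coefMn coef_XtP coef_XtXD cPt coefP_out //.
  by rewrite mul0rn !mulr0 !subr0. Qed.
Lemma size_DG j : (size (('X - t%:P) * P j + (('X - t%:P) * ('X * (P j)^`())) *+ 2)%R <= j.+2)%N.
Proof. move/leq_sizeP: (size_XtP j) => H1. move/leq_sizeP: (size_XtXD j) => H2.
  apply/leq_sizeP => k Hk. by rewrite coefD coefMn H1 // H2 // mul0rn addr0. Qed.
Lemma cXP_j j : ('X * P j)`_j = pp c j.
Proof. rewrite coef_XP. case: j => [|j] //. by rewrite coefP_sub. Qed.
Lemma cXP_j1 j : ('X * P j)`_j.+1 = 1.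
Proof. by rewrite coef_XP cPt. Qed.

End Main.


Lemma pp_pred c j : pp c j * INR (j.-1) = pp c j * (INR j - 1).
Proof. case: j => [|j]. simpl. rewrite zeroRE. ring. simpl (_.-1). rewrite S_INR. ring. Qed.

Section Final.
Variable (c : nat -> nat -> R).
Variables a b g A B t : R.
Hypotheses (ha : 0 < a) (hb : 0 < b) (hg : 0 < g) (hA : 0 <= A) (hAB : 0 <= A + B)
  (ht0 : 0 < t) (ht1 : t < 1) (hnz : ~ (A = 0 /\ A + B = 0)).
Hypothesis hc : monic_orthogonal c (weight a b g A B t).
Let w := weight a b g A B t.
Let hcn : forall n, c n n = 1 := proj1 hc.
Let horth : forall m n, m <> n -> Int01 (fun x => peval c m x * peval c n x * w x) = 0 := proj2 hc.

Let h j := hh' c a b g A B t j.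
Lemma h_pos j : 0 < h j.
Proof. apply L0_pos; auto. apply Pn_neq0; auto. Qed.

Lemma hn_eq j : hn c w j = h j.
Proof. unfold hn, h, hh', L0. f_equal. apply functional_extensionality => y.
  rewrite peval_Pn hornerM /= mulRE /w. hset. toR. ring. Qed.
Lemma Rn_eq j : Rn b c w j = b / h j * L1 a b g A B t (Pn c j * Pn c j)%R.
Proof. unfold Rn. rewrite hn_eq. f_equal. unfold L1. f_equal. apply functional_extensionality => y.
  rewrite peval_Pn hornerM /= mulRE /w. hset. unfold Rdiv. toR. ring. Qed.
Lemma yn_eq m : yn a c w (S m) = a / h m * Ly a b g A B t (Pn c (S m) * Pn c m)%R.
Proof. unfold yn. rewrite Nat.sub_succ Nat.sub_0_r hn_eq. f_equal. unfold Ly. f_equal.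
  apply functional_extensionality => y. rewrite !peval_Pn hornerM. reflexivity. Qed.
Lemma rn_eq m : rn b c w (S m) = b / h m * L1 a b g A B t (Pn c (S m) * Pn c m)%R.
Proof. unfold rn. rewrite Nat.sub_succ Nat.sub_0_r hn_eq. f_equal. unfold L1. f_equal.
  apply functional_extensionality => y. rewrite !peval_Pn hornerM. reflexivity. Qed.


Lemma offdiag m : t * yn a c w (S m) + (1 - t) * rn b c w (S m) = - pp c (S m) - t * INR (S m).
Proof.
  have T := template_poly a b g A B t ha hb hg hA hAB ht0 ht1 (Pn c (S m) * Pn c m)%R.
  rewrite polyE_off (L0D a b g A B t ha hb hg hA hAB ht0 ht1) in T.
  rewrite (orth_coef2 c hcn a b g A B t ha hb hg hA hAB ht0 ht1 horth m _ (size_XtD _ _ _)) in T.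
  rewrite (orth_low c hcn a b g A B t ha hb hg hA hAB ht0 ht1 horth (S m) _ (size_XtD _ _ _)) in T.
  rewrite (orthP c a b g A B t horth (S m) m ltac:(lia)) in T.
  rewrite (cOD_m c hcn) (cOD_m1 c hcn) in T.
  rewrite ?addRE ?mulRE ?oppRE ?natmulRE ?oneRE ?zeroRE in T.
  rewrite yn_eq rn_eq. fold (h m) in T.
  have Hh := h_pos m.
  set (Ly0 := Ly a b g A B t (Pn c (S m) * Pn c m)%R) in *.
  set (L10 := L1 a b g A B t (Pn c (S m) * Pn c m)%R) in *.
  set (p1 := pp c (S m)) in *. set (hm := h m) in *.
  replace (t * (a / hm * Ly0) + (1 - t) * (b / hm * L10)) with ((a * t * Ly0 + b * (1 - t) * L10) / hm) by (field; lra).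
  rewrite S_INR in T |- *.
  assert (E : a * t * Ly0 + b * (1 - t) * L10 = (- p1 - t * (INR m + 1)) * hm).
  { revert T. generalize (a * t * Ly0) (b * (1 - t) * L10). intros u v T. ring_simplify in T. ring_simplify. lra. }
  rewrite E. field. lra.
Qed.

Lemma diag j : (1 - t) * Rn b c w j =
  (2 * INR j + 2 + a + b + g) * (pp c j - pp c (S j)) - 2 * pp c j - t * (2 * INR j + 1 + a + b) + b.
Proof.
  have T := template_poly a b g A B t ha hb hg hA hAB ht0 ht1 ('X * (Pn c j * Pn c j))%R.
  rewrite (Ly_X a b g A B t ha hb hg hA hAB ht0 ht1) (L1_X a b g A B t ha hb hg hA hAB ht0 ht1) in T.
  rewrite polyE_diag in T.
  rewrite (orth_coef2 c hcn a b g A B t ha hb hg hA hAB ht0 ht1 horth j _ (size_DG _ _ _)) in T.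
  rewrite (mulrA ('X)%R (Pn c j) (Pn c j)) in T.
  rewrite (orth_coef2 c hcn a b g A B t ha hb hg hA hAB ht0 ht1 horth j _ (size_XP _ _)) in T.
  rewrite (cDG_j c hcn) (cDG_j1 c hcn) (cXP_j c) (cXP_j1 c hcn) in T.
  rewrite ?addRE ?mulRE ?oppRE ?natmulRE ?oneRE ?zeroRE in T.
  rewrite pp_pred in T.
  rewrite Rn_eq. change (L0 a b g A B t (Pn c j * Pn c j)%R) with (h j) in T.
  replace (INR 2) with 2 in T by (simpl; ring).
  have Hh := h_pos j.
  set (L10 := L1 a b g A B t (Pn c j * Pn c j)%R) in *.
  set (p0 := pp c j) in *. set (p1 := pp c (S j)) in *. set (hj := h j) in *.
  change (hh' c a b g A B t j) with hj in T.
  replace ((1 - t) * (b / hj * L10)) with ((b * (1 - t) * L10) / hj) by (field; lra).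
  assert (E : b * (1 - t) * L10 = ((2 * INR j + 2 + a + b + g) * (p0 - p1) - 2 * p0 - t * (2 * INR j + 1 + a + b) + b) * hj).
  { apply Rminus_diag_uniq. match type of T with ?X = 0 => transitivity (- X) end. ring. rewrite T; ring. }
  rewrite E. field. lra.
Qed.

Lemma pp0 : pp c 0 = 0.
Proof. reflexivity. Qed.

Lemma sumR m : (1 - t) * sum_f_R0 (fun j => Rn b c w j) m =
  - (2 * INR (S m) + a + b + g) * pp c (S m) + INR (S m) * b - t * INR (S m) * (INR (S m) + a + b).
Proof.
  induction m as [|m IH].
  - simpl sum_f_R0. rewrite diag pp0. simpl INR. ring.
  - simpl sum_f_R0. rewrite Rmult_plus_distr_l IH diag.
    rewrite !S_INR. ring.
Qed.

End Final.


End MC.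


Theorem mainTheorem5 (a b g A B : R) (ha : 0 < a) (hb : 0 < b) (hg : 0 < g)
  (hA : 0 <= A) (hAB : 0 <= A + B) (hnz : ~ (A = 0 /\ A + B = 0))
  (t : R) (ht : 0 < t < 1) (c : nat -> nat -> R)
  (hc : monic_orthogonal c (weight a b g A B t)) (n : nat) (hn1 : (1 <= n)%nat) :
  let w := weight a b g A B t in
  INR n * b + INR n * (INR n + g) * t
  - (2 * INR n + a + b + g) * (t - 1) * rn b c w n
  + (2 * INR n + a + b + g) * t * yn a c w n
  + (t - 1) * sum_f_R0 (fun j => Rn b c w j) (n - 1) = 0.
Proof.
  intros w. destruct ht as [ht0 ht1].
  destruct n as [|m]; [lia|].
  replace (S m - 1)%nat with m by lia.
  pose proof (MC.offdiag c a b g A B t ha hb hg hA hAB ht0 ht1 hnz hc m) as HO.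
  pose proof (MC.sumR c a b g A B t ha hb hg hA hAB ht0 ht1 hnz hc m) as HS.
  fold w in HO, HS.
  set (Y := yn a c w (S m)) in *. set (Rr := rn b c w (S m)) in *.
  set (Sm := sum_f_R0 (fun j => Rn b c w j) m) in *.
  transitivity (INR (S m) * b + INR (S m) * (INR (S m) + g) * t
    + (2 * INR (S m) + a + b + g) * (t * Y + (1 - t) * Rr) - (1 - t) * Sm); [ring|].
  rewrite HO, HS. ring.
Qed.
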